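(* Let $K$ be a field of characteristic $\neq2$, $\zeta_4$ a primitive fourth root of unity in a fixed algebraic closure of $K$, and let $x\in K^*$ with $-x\in(K^* )^2$. Choose a fourth root $\sqrt[4]x$ of $x$, giving the Kummer cocycle $x:G_K\to\mathbb Z/4$, $g(\sqrt[4]x)/\sqrt[4]x=\zeta_4^{x(g)}$, and the cochain $\binom x2:G_K\to\mathbb Z/2$, $g\mapsto\binom{x(g)}2\bmod2$. Then there is an equality of cocycles $\binom x2=\{2\sqrt{-x}\}:G_K\to\mathbb Z/2$, where $\sqrt{-x}=\zeta_4(\sqrt[4]x)^2\in K$.
   Context: For $z\in K^*$, $\{z\}:G_K\to\mathbb Z/2$ denotes the mod-$2$ Kummer cocycle $g\mapsto g(\sqrt z)/\sqrt z\in\mu_2=\mathbb Z/2$ (independent of the choice of square root). *)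

(* Defs.v *)
From HB Require Import structures.
From mathcomp Require Import all_boot all_order all_algebra.
Set Implicit Arguments. Unset Strict Implicit. Unset Printing Implicit Defensive.
Import Order.TTheory GRing.Theory Num.Theory.
Local Open Scope ring_scope.

Definition is_alg_closure (K : fieldType) (L : closedFieldType)
  (iota : {rmorphism K -> L}) : Prop :=
  forall a : L, exists2 p : {poly K}, p != 0 & root (map_poly iota p) a.

Definition in_GK (K : fieldType) (L : closedFieldType)
  (iota : {rmorphism K -> L}) (g : {rmorphism L -> L}) : Prop :=
  bijective g /\ forall c : K, g (iota c) = iota c.

Definition kummer4 (L : closedFieldType) (zeta y : L) (g : {rmorphism L -> L})
  : 'I_4 :=
  odflt ord0 [pick k : 'I_4 | g y == zeta ^+ k * y].

Definition kummer2 (L : closedFieldType) (r : L) (g : {rmorphism L -> L})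
  : bool :=
  odflt false [pick b : bool | g r == (-1) ^+ b * r].

(* Main.v *)
Require Import Defs.
From HB Require Import structures.
From mathcomp Require Import all_boot all_order all_algebra.
From mathcomp Require Import ring.
Import Order.TTheory GRing.Theory Num.Theory.
Local Open Scope ring_scope.

Lemma by_z (L : closedFieldType) (z a b c : L) : z ^+ 2 = -1 ->
  a - b = (z ^+ 2 + 1) * c -> a = b.
Proof. by move=> z2 h; apply/eqP; rewrite -subr_eq0 h z2 addNr mul0r. Qed.

Theorem lemma12p5 (K : fieldType) (L : closedFieldType)
  (iota : {rmorphism K -> L}) (Lclos : is_alg_closure iota)
  (char2 : (2%:R : K) != 0)
  (zeta : L) (zeta_prim : 4.-primitive_root zeta)
  (x : K) (x_neq0 : x != 0) (hx : exists t : K, t ^+ 2 = - x)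
  (y : L) (hy : y ^+ 4 = iota x)
  (s : K) (hs : iota s = zeta * y ^+ 2)
  (r : L) (hr : r ^+ 2 = iota (2%:R * s)) :
  forall g : {rmorphism L -> L}, in_GK iota g ->
    ('C(nat_of_ord (kummer4 zeta y g), 2) %% 2)%N = nat_of_bool (kummer2 r g).
Proof.
move=> g [_ gfix].
have z4 : zeta ^+ 4 = 1 by exact: prim_expr_order.
have z2 : zeta ^+ 2 = -1.
  have : (zeta ^+ 2) ^+ 2 = 1 ^+ 2 by rewrite -exprM expr1n.
  move/eqP; rewrite eqf_sqr => /orP [/eqP h|/eqP //].
  by move: h; rewrite -(expr0 zeta) => /eqP; rewrite (eq_prim_root_expr zeta_prim).
have y0 : y != 0.
  apply/negP => /eqP y0; move: hy; rewrite y0 expr0n /= => /esym/eqP.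
  by rewrite fmorph_eq0 (negPf x_neq0).
have two0 : (2%:R : L) != 0.
  by move: char2; apply: contra => /eqP h; rewrite -(fmorph_eq0 iota) rmorph_nat h.
have [k hk] : exists k : 'I_4, g y = zeta ^+ k * y.
  have : (g y / y) ^+ 4 = 1.
    by rewrite expr_div_n -rmorphXn hy gfix divff // fmorph_eq0.
  case/(prim_rootP zeta_prim) => k hk; exists k.
  by rewrite -hk divfK.
have hk4 : g y = zeta ^+ (kummer4 zeta y g) * y.
  rewrite /kummer4; case: pickP => [k' /eqP //|/(_ k)].
  by rewrite hk eqxx.
move: (kummer4 zeta y g) hk4 => {k hk} k hk.
have gz : g zeta = (-1) ^+ k * zeta.
  have : g (iota s) = iota s by rewrite gfix.
  rewrite hs rmorphM rmorphXn hk exprMn -exprM mulnC exprM z2.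
  move=> /(congr1 (fun t => t / y ^+ 2)).
  rewrite mulrA mulfK ?expf_neq0 // mulfK ?expf_neq0 // => h.
  rewrite -[in RHS]h mulrCA -expr2 -exprM mulnC exprM sqrrN !expr1n mulr1 //.
have r0 : r != 0.
  apply/negP => /eqP r0; move: hr; rewrite r0 expr0n /= => /esym/eqP.
  rewrite fmorph_eq0 mulf_eq0 (negPf char2) /= => /eqP s0.
  move: hs; rewrite s0 rmorph0 => /esym/eqP; rewrite mulf_eq0 expf_eq0 (negPf y0) andbF orbF.
  move=> /eqP zz; move: z2; rewrite zz expr0n /= => /eqP; rewrite eq_sym oppr_eq0 oner_eq0 //.
have k2 : forall c : bool, g r = (-1) ^+ c * r -> kummer2 r g = c.
  move=> c hc; rewrite /kummer2; case: pickP => [b /eqP hb|/(_ c)]; last first.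
    by rewrite hc eqxx.
  move: hb; rewrite hc => /(mulIf r0) hb.
  have m1 : (-1 : L) != 1.
    apply/negP => /eqP h; move: two0; have -> : (2%:R : L) = 1 + 1 by [].
    by rewrite -{1}h addNr eqxx.
  case: b c hb {hc} => [] [] //= /eqP; rewrite ?expr1 ?expr0 => h.
    by move: m1; rewrite eq_sym h.
  by move: m1; rewrite h.
have hw : (y * (1 + zeta)) ^+ 2 = r ^+ 2.
  rewrite hr rmorphM rmorph_nat hs.
  by apply: (@by_z L zeta _ _ (y ^+ 2) z2); ring.
have gw : g (y * (1 + zeta)) = (-1) ^+ (odd 'C(k, 2)) * (y * (1 + zeta)).
  rewrite rmorphM rmorphD rmorph1 hk gz.
  case: k {hk gz} => [[|[|[|[|n]]]] hn] //=.
  - by rewrite !expr0; ring.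
  - by apply: (@by_z L zeta _ _ (- y) z2); ring.
  - by apply: (@by_z L zeta _ _ (y * (1 + zeta)) z2); ring.
  - by apply: (@by_z L zeta _ _ (- (zeta ^+ 2 - zeta - 1) * y) z2); ring.
rewrite modn2 (k2 (odd 'C(k, 2))) //.
move/eqP: hw; rewrite eqf_sqr => /orP [] /eqP h.
  by rewrite -h gw.
by rewrite -(opprK r) -h rmorphN gw mulrN.
Qed.
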